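(* Let $\lambda$ be a partition of $n$ with conjugate partition $\lambda'$, let $k\ge0$, and let $X\subseteq[n+k]$. Then $$\#\{S\in\mathrm{SYT}^{+k}(\lambda):\mathrm{Des}^{+k}(S)=X\}=\#\{S\in\mathrm{SYT}^{+k}(\lambda'):\mathrm{Des}^{+k}(S)=X\}.$$
   Context: $\mathrm{SYT}^{+k}(\lambda)$: fillings $S$ of the cells of the Ferrers diagram of $\lambda$ (rows numbered from the top) by nonempty sets of positive integers forming a set partition of $[n+k]$, with $\max S(u)<\min S(v)$ whenever $u\ne v$ and $u$ is weakly north and weakly west of $v$. For such $S$, $\mathrm{Des}^{+k}(S)$ is the set of all $x\in[n+k]$ that are not the minimum of the cell-set containing them, together with all $j$ such that $j$ is the minimum of the set in some cell $c$, $j+1$ is the minimum of the set in some cell $c'$, and $c'$ lies in a strictly higher row than $c$. *)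

(* Defs.v *)
From mathcomp Require Import all_boot.
Set Implicit Arguments. Unset Strict Implicit. Unset Printing Implicit Defensive.

Definition is_partition (la : seq nat) (n : nat) : bool :=
  [&& sorted geq la, all (fun p => 0 < p) la & sumn la == n].

Definition conj_part (la : seq nat) : seq nat :=
  mkseq (fun j => count (fun p => j < p) la) (head 0 la).

(* Cell (i, j) = row i (counted from the top, starting at 0), column j.
   For a partition of n every cell has i < n and j < n. *)
Definition cellp (n : nat) (la : seq nat) (u : 'I_n * 'I_n) : bool :=
  (u.2 : nat) < nth 0 la u.1.

(* A set-valued filling: S u is the set of entries in cell u.  The integer
   x in [n+k] = {1,..,n+k} is encoded by the ordinal x-1 : 'I_(n+k). *)
Definition filling (n k : nat) := {ffun 'I_n * 'I_n -> {set 'I_(n + k)}}.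

Definition sytk (n k : nat) (la : seq nat) (S : filling n k) : bool :=
  [&& [forall u, ~~ cellp la u ==> (S u == set0)],
      [forall u, cellp la u ==> (S u != set0)],
      [forall u, forall v, (u != v) ==> [disjoint S u & S v]],
      [forall x : 'I_(n + k), exists u, x \in S u]
    & [forall u, forall v,
        [&& cellp la u, cellp la v, u != v, u.1 <= v.1 & u.2 <= v.2] ==>
        [forall x in S u, forall y in S v, x < y]]].

Definition is_min (n k : nat) (S : filling n k) (u : 'I_n * 'I_n) (x : 'I_(n + k)) :=
  (x \in S u) && [forall y in S u, x <= y].

Definition desk (n k : nat) (S : filling n k) : {set 'I_(n + k)} :=
  [set x : 'I_(n + k) |
     [exists u, (x \in S u) && ~~ is_min S u x]
  || [exists c, exists c', exists y : 'I_(n + k),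
        [&& (y : nat) == x.+1, is_min S c x, is_min S c' y & (c'.1 < c.1)]]].

(* Main.v *)
Require Import Defs.
From mathcomp Require Import all_boot zify.
Set Implicit Arguments. Unset Strict Implicit. Unset Printing Implicit Defensive.

Section Basic.
Variables (n k : nat) (la : seq nat).
Local Notation N := (n + k).
Local Notation cell := ('I_n * 'I_n)%type.

Definition leC (u v : cell) := (u.1 <= v.1) && (u.2 <= v.2).

Definition deskw (w : cell -> nat) (S : filling n k) : {set 'I_(n + k)} :=
  [set x : 'I_(n + k) |
     [exists u, (x \in S u) && ~~ is_min S u x]
  || [exists c, exists c', exists y : 'I_(n + k),
        [&& (y : nat) == x.+1, is_min S c x, is_min S c' y & (w c' < w c)]]].

Lemma desk_fst S : desk S = deskw (fun c => c.1) S.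
Proof. by []. Qed.

Variable S : filling n k.
Hypothesis HS : sytk la S.

Lemma sy_out u : ~~ cellp la u -> S u = set0.
Proof. case/and5P: HS => /forallP H _ _ _ _ Hu; exact/eqP/(implyP (H u)). Qed.

Lemma sy_cell u z : z \in S u -> cellp la u.
Proof. move=> Hz; apply/negPn/negP => /sy_out Hu; by rewrite Hu inE in Hz. Qed.

Lemma sy_ne u : cellp la u -> exists z, z \in S u.
Proof.
case/and5P: HS => _ /forallP H _ _ _ Hu.
have := implyP (H u) Hu; case/set0Pn => z Hz; by exists z.
Qed.

Lemma sy_uniq u v z : z \in S u -> z \in S v -> u = v.
Proof.
case/and5P: HS => _ _ /forallP H _ _ Hu Hv; apply/eqP/negPn/negP => Huv.
have := implyP (forallP (H u) v) Huv; move/disjointFr => D. by rewrite (D z Hu) in Hv.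
Qed.

Lemma sy_cover z : exists u, z \in S u.
Proof. case/and5P: HS => _ _ _ /forallP H _; exact/existsP/H. Qed.

Lemma sy_ord u v p q : cellp la u -> cellp la v -> u != v -> leC u v ->
  p \in S u -> q \in S v -> p < q.
Proof.
case/and5P: HS => _ _ _ _ /forallP H Hu Hv Huv Hl Hp Hq.
have := implyP (forallP (H u) v); rewrite Hu Hv Huv /=.
case/andP: Hl => -> -> /(_ isT) /forall_inP /(_ p Hp) /forall_inP; exact.
Qed.

End Basic.

Lemma min_uniq n k (S : filling n k) u p q : is_min S u p -> is_min S u q -> p = q.
Proof.
case/andP=> Hp /forall_inP Hp' /andP [Hq /forall_inP Hq'].
apply/val_inj/eqP; rewrite eqn_leq Hp' // Hq' //.
Qed.

Section T.
Variables (N : nat) (x y : 'I_N).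
Hypothesis Hxy : (y : nat) = x.+1.
Definition tt (z : 'I_N) := if z == x then y else if z == y then x else z.

Lemma ttK z : tt (tt z) = z.
Proof.
rewrite /tt; have nxy : x != y by apply/eqP => E; move: Hxy; rewrite E; lia.
case: (z =P x) => [->|/eqP zx]; first by rewrite ?eqxx (eq_sym y x) (negbTE nxy) ?eqxx.
case: (z =P y) => [->|/eqP zy]; first by rewrite ?eqxx ?(negbTE nxy) ?eqxx.
by rewrite (negbTE zx) (negbTE zy).
Qed.

Lemma tt_le p q : (p == x) && (q == y) = false -> (p == y) && (q == x) = false ->
  (tt p <= tt q) = (p <= q).
Proof.
rewrite /tt -!val_eqE /=.
case: (val p =P val x) => [E1|N1]; case: (val q =P val y) => [E2|N2];
case: (val p =P val y) => [E3|N3]; case: (val q =P val x) => [E4|N4] //=;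
  move=> *; simpl in *; lia.
Qed.
End T.

Section Swap.
Variables (n k : nat) (la : seq nat) (a b : 'I_n * 'I_n).
Local Notation N := (n + k).
Local Notation cell := ('I_n * 'I_n)%type.
Hypotheses (Hab : a != b) (Hinc1 : ~~ leC a b) (Hinc2 : ~~ leC b a).

Definition sig (c : cell) := if c == a then b else if c == b then a else c.

Lemma siga : sig a = b. Proof. by rewrite /sig eqxx. Qed.
Lemma sigb : sig b = a. Proof. by rewrite /sig eq_sym (negbTE Hab) eqxx. Qed.
Lemma sigo c : c != a -> c != b -> sig c = c.
Proof. by rewrite /sig => /negbTE -> /negbTE ->. Qed.
Lemma sigK c : sig (sig c) = c.
Proof.
case: (c =P a) => [->|/eqP ca]; first by rewrite siga sigb.
case: (c =P b) => [->|/eqP cb]; first by rewrite sigb siga.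
by rewrite !sigo.
Qed.

Definition swS (x y : 'I_N) (S : filling n k) : filling n k :=
  [ffun u => [set z | tt x y z \in S u]].

Section SwapS.
Variables (S : filling n k) (x y : 'I_N).
Hypotheses (HS : sytk la S) (Hxy : (y : nat) = x.+1)
  (Hc : (is_min S a x && is_min S b y) || (is_min S b x && is_min S a y)).
Local Notation S' := (swS x y S).
Local Notation t := (tt x y).

Lemma nxy : x != y. Proof. apply/eqP => E; move: Hxy; rewrite E; lia. Qed.
Lemma ttx : t x = y. Proof. by rewrite /tt eqxx. Qed.
Lemma tty : t y = x. Proof. by rewrite /tt eq_sym (negbTE nxy) eqxx. Qed.
Lemma tto z : z != x -> z != y -> t z = z.
Proof. by rewrite /tt => /negbTE -> /negbTE ->. Qed.

Lemma in_swS z u : (z \in S' u) = (t z \in S u).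
Proof. by rewrite ffunE inE. Qed.

Lemma minin c v : is_min S c v -> v \in S c.
Proof. by case/andP. Qed.

Lemma sepxy c : x \in S c -> y \in S c -> False.
Proof.
move=> H1 H2; case/orP: Hc => /andP [/minin A1 /minin A2].
- have E1 := sy_uniq HS H1 A1; have E2 := sy_uniq HS H2 A2.
  by move: Hab; rewrite -E1 -E2 eqxx.
- have E1 := sy_uniq HS H1 A1; have E2 := sy_uniq HS H2 A2.
  by move: Hab; rewrite -E1 -E2 eqxx.
Qed.

Lemma tt_cond c p q : t p \in S c -> t q \in S c -> (p == x) && (q == y) = false.
Proof.
move=> H1 H2; apply/negbTE/negP => /andP [/eqP Ep /eqP Eq].
rewrite Ep ttx in H1; rewrite Eq tty in H2; exact: (sepxy H2 H1).
Qed.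

Lemma min_swS c z : is_min S' c z = is_min S c (t z).
Proof.
rewrite /is_min in_swS; apply/andP/andP => [[H1 /forall_inP H2]|[H1 /forall_inP H2]];
  split => //; apply/forall_inP => q Hq.
- have Hq' : t q \in S' c by rewrite in_swS (ttK Hxy).
  have := H2 _ Hq'.
  rewrite -(tt_le Hxy (p:=z) (q:=t q)) ?(ttK Hxy) //.
  + apply: (tt_cond (c:=c)); by rewrite ?(ttK Hxy).
  + rewrite andbC; apply: (tt_cond (c:=c)); by rewrite ?(ttK Hxy).
- rewrite in_swS in Hq; have := H2 _ Hq.
  rewrite (tt_le Hxy) //.
  + exact: (tt_cond H1 Hq).
  + rewrite andbC; exact: (tt_cond Hq H1).
Qed.

Lemma min_sig c v : is_min S c v -> is_min S (sig c) (t v).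
Proof.
move=> H.
case: (v =P x) => [Ev|/eqP vx].
  rewrite Ev ttx; rewrite Ev in H.
  case/orP: Hc => /andP [H1 H2].
  - by rewrite (sy_uniq HS (minin H) (minin H1)) siga.
  - by rewrite (sy_uniq HS (minin H) (minin H1)) sigb.
case: (v =P y) => [Ev|/eqP vy].
  rewrite Ev tty; rewrite Ev in H.
  case/orP: Hc => /andP [H1 H2].
  - by rewrite (sy_uniq HS (minin H) (minin H2)) sigb.
  - by rewrite (sy_uniq HS (minin H) (minin H2)) siga.
rewrite tto // sigo //.
- apply/eqP => Ec; rewrite Ec in H.
  case/orP: Hc => /andP [H1 H2].
  + by move: vx; rewrite (min_uniq H H1) eqxx.
  + by move: vy; rewrite (min_uniq H H2) eqxx.
- apply/eqP => Ec; rewrite Ec in H.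
  case/orP: Hc => /andP [H1 H2].
  + by move: vy; rewrite (min_uniq H H2) eqxx.
  + by move: vx; rewrite (min_uniq H H1) eqxx.
Qed.

Lemma min_tt c v : is_min S c (t v) = is_min S (sig c) v.
Proof.
apply/idP/idP => H.
- by have := min_sig H; rewrite (ttK Hxy).
- by have := min_sig H; rewrite sigK.
Qed.

Lemma sytk_swS : sytk la S'.
Proof.
apply/and5P; split.
- apply/forallP => u; apply/implyP => Hu; apply/eqP/setP => z.
  by rewrite in_swS (sy_out HS Hu) !inE.
- apply/forallP => u; apply/implyP => Hu; case: (sy_ne HS Hu) => z Hz.
  apply/set0Pn; exists (t z); by rewrite in_swS (ttK Hxy).
- apply/forallP => u; apply/forallP => v; apply/implyP => Huv.
  rewrite -setI_eq0; apply/eqP/setP => z; rewrite !inE !in_swS.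
  apply/negbTE/negP => /andP [H1 H2]; by rewrite (sy_uniq HS H1 H2) eqxx in Huv.
- apply/forallP => z; case: (sy_cover HS (t z)) => u Hu.
  apply/existsP; exists u; by rewrite in_swS.
- apply/forallP => u; apply/forallP => v; apply/implyP => /and5P [Hu Hv Huv H1 H2].
  apply/forall_inP => p Hp; apply/forall_inP => q Hq.
  rewrite in_swS in Hp; rewrite in_swS in Hq.
  have Hlt := sy_ord HS Hu Hv Huv (introT andP (conj H1 H2)) Hp Hq.
  case E1: ((p == x) && (q == y)).
    case/andP: E1 => /eqP -> /eqP ->; rewrite Hxy; exact: ltnSn.
  case E2: ((p == y) && (q == x)).
    case/andP: E2 => /eqP Ep /eqP Eq.
    rewrite Ep tty in Hp; rewrite Eq ttx in Hq.
    exfalso; case/orP: Hc => /andP [/minin A1 /minin A2].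
    + have U := sy_uniq HS Hp A1; have V := sy_uniq HS Hq A2.
      by move: Hinc1; rewrite /leC -U -V H1 H2.
    + have U := sy_uniq HS Hp A1; have V := sy_uniq HS Hq A2.
      by move: Hinc2; rewrite /leC -U -V H1 H2.
  move: Hlt; rewrite !ltnNge (tt_le Hxy) //; by rewrite andbC.
Qed.

Lemma nonmin_false c v : is_min S c v ->
  [exists u, (v \in S u) && ~~ is_min S u v] = false.
Proof.
move=> H; apply/negbTE/existsP => [[u /andP [Hu Hn]]].
by move: Hn; rewrite -(sy_uniq HS (minin H) Hu) H.
Qed.

Lemma nonmin_tt v : [exists u, (t v \in S u) && ~~ is_min S u (t v)] =
   [exists u, (v \in S u) && ~~ is_min S u v].
Proof.
have [cx Hcx] : exists c, is_min S c x.
  by case/orP: Hc => /andP [H1 H2]; [exists a | exists b].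
have [cy Hcy] : exists c, is_min S c y.
  by case/orP: Hc => /andP [H1 H2]; [exists b | exists a].
case: (v =P x) => [->|/eqP vx].
  by rewrite ttx (nonmin_false Hcx) (nonmin_false Hcy).
case: (v =P y) => [->|/eqP vy].
  by rewrite tty (nonmin_false Hcx) (nonmin_false Hcy).
by rewrite tto.
Qed.

Lemma desk_swS (w : cell -> nat) : deskw (fun c => w (sig c)) S' = deskw w S.
Proof.
apply/setP => z; rewrite !inE; congr orb.
- rewrite -nonmin_tt; apply: eq_existsb => u; by rewrite in_swS min_swS.
- apply/existsP/existsP => [[c /existsP [c' /existsP [y' H]]]|[c /existsP [c' /existsP [y' H]]]].
  + exists (sig c); apply/existsP; exists (sig c'); apply/existsP; exists y'.
    by move: H; rewrite !min_swS !min_tt.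
  + exists (sig c); apply/existsP; exists (sig c'); apply/existsP; exists y'.
    by rewrite !min_swS !min_tt !sigK.
Qed.

Lemma cond_swS : (is_min S' a x && is_min S' b y) || (is_min S' b x && is_min S' a y).
Proof.
rewrite !min_swS ttx tty.
by case/orP: Hc => /andP [-> ->]; rewrite ?orbT.
Qed.

Lemma swSK : swS x y S' = S.
Proof. apply/ffunP => u; apply/setP => z; by rewrite !ffunE !inE (ttK Hxy). Qed.

End SwapS.
End Swap.

Lemma card_le_inj (T T' : finType) (A : {set T}) (B : {set T'}) (f : T -> T') :
  (forall x, x \in A -> f x \in B) -> {in A &, injective f} -> #|A| <= #|B|.
Proof.
move=> H inj; rewrite -(card_in_imset inj); apply: subset_leq_card.
by apply/subsetP => _ /imsetP [x Hx ->]; exact: H.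
Qed.

Lemma deskw_ext n k (S : filling n k) w1 w2 :
  (forall c c' (z y' : 'I_(n + k)), (y' : nat) == z.+1 -> is_min S c z -> is_min S c' y' ->
     (w1 c' < w1 c) = (w2 c' < w2 c)) -> deskw w1 S = deskw w2 S.
Proof.
move=> H; apply/setP => z; rewrite !inE; congr orb.
apply: eq_existsb => c; apply: eq_existsb => c'; apply: eq_existsb => y'.
apply/and4P/and4P => [[E H1 H2 H3]|[E H1 H2 H3]]; split => //.
- by rewrite -(H c c' z y').
- by rewrite (H c c' z y').
Qed.

Section Phi.
Variables (n k : nat) (la : seq nat) (a b : 'I_n * 'I_n).
Local Notation N := (n + k).
Local Notation cell := ('I_n * 'I_n)%type.
Hypotheses (Hab : a != b) (Hinc1 : ~~ leC a b) (Hinc2 : ~~ leC b a).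

Definition cond2 (S : filling n k) (p : 'I_N * 'I_N) :=
  ((p.2 : nat) == p.1.+1) &&
  ((is_min S a p.1 && is_min S b p.2) || (is_min S b p.1 && is_min S a p.2)).

Definition phi (S : filling n k) :=
  if [pick p | cond2 S p] is Some p then swS p.1 p.2 S else S.

Lemma cond2_uniq S p q : cond2 S p -> cond2 S q -> p = q.
Proof.
case: p => p1 p2; case: q => q1 q2 /= /andP [/eqP Hp Cp] /andP [/eqP Hq Cq].
case/orP: Cp => /andP [P1 P2]; case/orP: Cq => /andP [Q1 Q2]; simpl in *.
- by rewrite (min_uniq P1 Q1) (min_uniq P2 Q2).
- have E1 := min_uniq P1 Q2; have E2 := min_uniq P2 Q1.
  exfalso; move: Hp Hq; rewrite E1 E2; lia.
- have E1 := min_uniq P1 Q2; have E2 := min_uniq P2 Q1.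
  exfalso; move: Hp Hq; rewrite E1 E2; lia.
- by rewrite (min_uniq P1 Q1) (min_uniq P2 Q2).
Qed.

Variant phi_spec S : filling n k -> Type :=
 | PhiSome p of cond2 S p : phi_spec S (swS p.1 p.2 S)
 | PhiNone of (forall p, ~~ cond2 S p) : phi_spec S S.

Lemma phiP S : phi_spec S (phi S).
Proof.
rewrite /phi; case: pickP => [p Hp|Hn]; first exact: PhiSome.
by apply: PhiNone => p; rewrite Hn.
Qed.

Lemma phi_sytk S : sytk la S -> sytk la (phi S).
Proof.
move=> HS; case: phiP => // p /andP [/eqP Hp Hc].
exact: (sytk_swS Hab Hinc1 Hinc2 HS Hp Hc).
Qed.

Lemma phiK S : sytk la S -> phi (phi S) = S.
Proof.
move=> HS; case: (phiP S) => [p Hp0|Hn]; last first.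
  by rewrite /phi; case: pickP => // p; rewrite (negbTE (Hn p)).
have /andP [/eqP Hp Hc] := Hp0.
have C' : cond2 (swS p.1 p.2 S) p.
  by rewrite /cond2 Hp eqxx (cond_swS Hab Hinc1 Hinc2 HS Hp Hc).
case: phiP => [q Hq|Hn]; last by move: (Hn p); rewrite C'.
rewrite -(cond2_uniq C' Hq); exact: (swSK S Hp).
Qed.

Variable w : cell -> nat.
Hypothesis Hadj : forall d, cellp la d -> d != a -> d != b ->
  ((w d < w a) == (w d < w b)) && ((w a < w d) == (w b < w d)).

Lemma phi_desk S : sytk la S -> deskw (fun c => w (sig a b c)) (phi S) = deskw w S.
Proof.
move=> HS; case: phiP => [p /andP [/eqP Hp Hc]|Hn].
  exact: (desk_swS Hab Hinc1 Hinc2 HS Hp Hc).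
apply: deskw_ext => c c' z y' /eqP Ey H1 H2.
have C1 : cellp la c := sy_cell HS (minin H1).
have C2 : cellp la c' := sy_cell HS (minin H2).
case: (c =P a) => [Ec|/eqP ca].
- rewrite Ec siga //.
  case: (c' =P a) => [->|/eqP c'a]; first by rewrite siga // !ltnn.
  case: (c' =P b) => [Ec'|/eqP c'b].
    by move: (Hn (z, y')); rewrite /cond2 /= Ey eqxx -Ec -Ec' H1 H2.
  rewrite sigo //; by case/andP: (Hadj C2 c'a c'b) => /eqP -> _.
case: (c =P b) => [Ec|/eqP cb].
- rewrite Ec sigb //.
  case: (c' =P b) => [->|/eqP c'b]; first by rewrite sigb // !ltnn.
  case: (c' =P a) => [Ec'|/eqP c'a].
    by move: (Hn (z, y')); rewrite /cond2 /= Ey eqxx -Ec -Ec' H1 H2 orbT.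
  rewrite sigo //; by case/andP: (Hadj C2 c'a c'b) => /eqP -> _.
rewrite (sigo ca cb).
case: (c' =P a) => [->|/eqP c'a].
  rewrite siga //; by case/andP: (Hadj C1 ca cb) => _ /eqP ->.
case: (c' =P b) => [->|/eqP c'b].
  rewrite sigb //; by case/andP: (Hadj C1 ca cb) => _ /eqP ->.
by rewrite sigo.
Qed.

End Phi.

Section Main.
Variables (n k : nat) (la : seq nat) (X : {set 'I_(n + k)}).
Local Notation cell := ('I_n * 'I_n)%type.

Definition Aset (w : cell -> nat) :=
  [set S : filling n k | sytk la S && (deskw w S == X)].

Lemma card_swap1 (a b : cell) (Hab : a != b) (Hinc1 : ~~ leC a b) (Hinc2 : ~~ leC b a)
  (w : cell -> nat)
  (Hadj : forall d, cellp la d -> d != a -> d != b ->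
    ((w d < w a) == (w d < w b)) && ((w a < w d) == (w b < w d))) :
  #|Aset w| <= #|Aset (fun c => w (sig a b c))|.
Proof.
apply: (card_le_inj (f := phi a b)) => [S|S1 S2].
  rewrite !inE => /andP [HS /eqP HD].
  by rewrite (phi_sytk Hab Hinc1 Hinc2 HS) (phi_desk Hab Hinc1 Hinc2 Hadj HS) HD eqxx.
rewrite !inE => /andP [H1 _] /andP [H2 _] E.
by rewrite -(phiK Hab Hinc1 Hinc2 H1) E (phiK Hab Hinc1 Hinc2 H2).
Qed.

Lemma Aset_ext w1 w2 : (forall c, w1 c = w2 c) -> Aset w1 = Aset w2.
Proof.
move=> H; apply/setP => S; rewrite !inE (deskw_ext (w2 := w2)) // => *; by rewrite !H.
Qed.

Lemma card_swap (a b : cell) (Hab : a != b) (Hinc1 : ~~ leC a b) (Hinc2 : ~~ leC b a)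
  (w : cell -> nat)
  (Hadj : forall d, cellp la d -> d != a -> d != b ->
    ((w d < w a) == (w d < w b)) && ((w a < w d) == (w b < w d))) :
  #|Aset w| = #|Aset (fun c => w (sig a b c))|.
Proof.
apply/eqP; rewrite eqn_leq card_swap1 //=.
apply: (@leq_trans #|Aset (fun c => w (sig a b (sig a b c)))|); last first.
  by rewrite (@Aset_ext _ w) // => c; rewrite sigK.
apply: card_swap1 => // d Cd da db.
rewrite (@sigo _ a b d da db) siga // sigb //.
by case/andP: (Hadj d Cd da db) => /eqP -> /eqP ->; rewrite !eqxx.
Qed.

Definition natw (w : cell -> nat) := forall u v, cellp la u -> cellp la v -> u != v ->
  (w u != w v) && (leC u v ==> (w u < w v)).

Definition invset (w1 w2 : cell -> nat) :=
  [set p : cell * cell | [&& cellp la p.1, cellp la p.2, w1 p.1 < w1 p.2 & w2 p.2 < w2 p.1]].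

Lemma same_order w1 w2 : invset w1 w2 = set0 -> natw w1 -> natw w2 -> Aset w1 = Aset w2.
Proof.
move=> E N1 N2; apply/setP => S; rewrite !inE; case HS: (sytk la S) => //=.
rewrite (deskw_ext (w2 := w2)) // => c c' z y' _ H1 H2.
have C1 : cellp la c := sy_cell HS (minin H1).
have C2 : cellp la c' := sy_cell HS (minin H2).
case: (c =P c') => [->|/eqP cc']; first by rewrite !ltnn.
have c'c : c' != c by rewrite eq_sym.
have /andP [n1 _] := N1 c' c C2 C1 c'c.
have /andP [n2 _] := N2 c' c C2 C1 c'c.
apply/idP/idP => H; apply/negPn/negP => H'.
- have : (c', c) \in invset w1 w2 by rewrite inE /= C1 C2 H /=; lia.
  by rewrite E inE.
- have : (c, c') \in invset w1 w2 by rewrite inE /= C1 C2 H /= andbT; lia.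
  by rewrite E inE.
Qed.


Lemma main_ind m : forall w1 w2, #|invset w1 w2| <= m -> natw w1 -> natw w2 ->
  #|Aset w1| = #|Aset w2|.
Proof.
elim: m => [|m IH] w1 w2 Hm N1 N2.
  rewrite leqn0 cards_eq0 in Hm; by rewrite (same_order (eqP Hm)).
case: (set_0Vmem (invset w1 w2)) => [E|[p0 Hp0]]; first by rewrite (same_order E).
case: (arg_minnP (fun p => w1 p.2 - w1 p.1) Hp0) => p Hp Hmin.
have {}Hp : p \in invset w1 w2 := Hp.
move: Hp; rewrite inE => /and4P [Ca Cb Lab Lba].
set a := p.1 in Ca Cb Lab Lba Hmin; set b := p.2 in Ca Cb Lab Lba Hmin.
have Hab : a != b by apply/eqP => E; rewrite E ltnn in Lab.
have Hinc1 : ~~ leC a b.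
  apply/negP => L; have /andP [_ /implyP/(_ L)] := N2 a b Ca Cb Hab; lia.
have Hinc2 : ~~ leC b a.
  apply/negP => L; have /andP [_ /implyP/(_ L)] := N1 b a Cb Ca (negbT (introF eqP (fun e => (negP Hab) (introT eqP (esym e))))); lia.
have Hadj : forall d, cellp la d -> d != a -> d != b ->
    ((w1 d < w1 a) == (w1 d < w1 b)) && ((w1 a < w1 d) == (w1 b < w1 d)).
  move=> d Cd da db.
  have /andP [n1 _] := N1 d a Cd Ca da.
  have /andP [n2 _] := N1 d b Cd Cb db.
  have /andP [n3 _] := N2 d a Cd Ca da.
  have NB : ~~ ((w1 a < w1 d) && (w1 d < w1 b)).
    apply/negP => /andP [L1 L2].
    case L3: (w2 d < w2 a).
      have : (a, d) \in invset w1 w2 by rewrite inE /= Ca Cd L1 L3.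
      move/Hmin => /=; lia.
    have : (d, b) \in invset w1 w2 by rewrite inE /= Cd Cb L2 /=; lia.
    move/Hmin => /=; lia.
  apply/andP; split; apply/eqP; lia.
set w1' := fun c => w1 (sig a b c).
have Hs := card_swap Hab Hinc1 Hinc2 Hadj; rewrite -/w1' in Hs; rewrite Hs.
have sigC : forall c, cellp la c -> cellp la (sig a b c).
  move=> c Cc; rewrite /sig; case: (c == a) => //; by case: (c == b).
have N1' : natw w1'.
  move=> u v Cu Cv uv; rewrite /w1'.
  have suv : sig a b u != sig a b v.
    apply/negP => /eqP E; move: uv; by rewrite -(sigK Hab u) E (sigK Hab) eqxx.
  have /andP [-> _] := N1 _ _ (sigC u Cu) (sigC v Cv) suv; apply/implyP => L.
  case: (u =P a) => [Eu|/eqP ua].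
    rewrite Eu in L uv *; rewrite siga //.
    case: (v =P b) => [Ev|/eqP vb]; first by move: Hinc1; rewrite -Ev L.
    have va : v != a by rewrite eq_sym.
    rewrite (@sigo _ a b v) //; have /andP [_ /implyP/(_ L) H] := N1 a v Ca Cv uv.
    by case/andP: (Hadj v Cv va vb) => _ /eqP <-.
  case: (u =P b) => [Eu|/eqP ub].
    rewrite Eu in L uv *; rewrite sigb //.
    case: (v =P a) => [Ev|/eqP va]; first by move: Hinc2; rewrite -Ev L.
    have vb : v != b by rewrite eq_sym.
    rewrite (@sigo _ a b v) //; have /andP [_ /implyP/(_ L) H] := N1 b v Cb Cv uv.
    by case/andP: (Hadj v Cv va vb) => _ /eqP ->.
  rewrite (@sigo _ a b u) //; have /andP [_ /implyP/(_ L) H] := N1 u v Cu Cv uv.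
  case: (v =P a) => [Ev|/eqP va].
    rewrite Ev siga // ; rewrite Ev in H.
    by case/andP: (Hadj u Cu ua ub) => /eqP <- _.
  case: (v =P b) => [Ev|/eqP vb].
    rewrite Ev sigb // ; rewrite Ev in H.
    by case/andP: (Hadj u Cu ua ub) => /eqP -> _.
  by rewrite (@sigo _ a b v).
apply: IH => //.
have Pr : invset w1' w2 \proper invset w1 w2.
  apply/properP; split.
    apply/subsetP => -[u v]; rewrite !inE /= /w1' => /and4P [Cu Cv H1 H2].
    rewrite Cu Cv H2 andbT /=.
    case: (u =P a) => [Eu|/eqP ua].
      rewrite Eu siga // in H1 *; rewrite Eu in H2.
      case: (v =P a) => [Ev|/eqP va]; first by rewrite Ev ltnn in H2.
      case: (v =P b) => [Ev|/eqP vb]; first by rewrite Ev sigb // in H1; lia.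
      rewrite (@sigo _ a b v) // in H1.
      by case/andP: (Hadj v Cv va vb) => _ /eqP ->.
    case: (u =P b) => [Eu|/eqP ub].
      rewrite Eu sigb // in H1 *; rewrite Eu in H2.
      case: (v =P b) => [Ev|/eqP vb]; first by rewrite Ev ltnn in H2.
      case: (v =P a) => [Ev|/eqP va]; first by rewrite Ev in H2; lia.
      rewrite (@sigo _ a b v) // in H1.
      by case/andP: (Hadj v Cv va vb) => _ /eqP <-.
    rewrite (@sigo _ a b u) // in H1.
    case: (v =P a) => [Ev|/eqP va].
      rewrite Ev siga // in H1 *.
      by case/andP: (Hadj u Cu ua ub) => /eqP -> _.
    case: (v =P b) => [Ev|/eqP vb].
      rewrite Ev sigb // in H1 *.
      by case/andP: (Hadj u Cu ua ub) => /eqP <- _.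
    by rewrite (@sigo _ a b v) // in H1.
  exists (a, b); first by rewrite inE /= Ca Cb Lab Lba.
  rewrite inE /= /w1' siga // sigb //; apply/negP => /and4P [_ _ L _]; lia.
have := proper_card Pr; lia.
Qed.

End Main.

Lemma head_max (la : seq nat) q : sorted geq la -> q \in la -> q <= head 0 la.
Proof.
case: la => [|p l] //= Hs; rewrite inE => /orP [/eqP -> //|Hq].
have := order_path_min (fun y x z H1 H2 => leq_trans H2 H1) Hs.
by move/allP/(_ q Hq).
Qed.

Lemma count_nth (la : seq nat) : sorted geq la -> forall i j,
  (i < count (fun p => j < p) la) = (j < nth 0 la i).
Proof.
elim: la => [|p l IH] Hs i j; first by rewrite nth_nil /= ltn0.
have Hl : sorted geq l := path_sorted Hs.
have Hle : forall q, q \in l -> q <= p.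
  move=> q Hq; apply: (head_max Hs); by rewrite inE Hq orbT.
rewrite /=; case Hjp: (j < p) => /=.
  case: i => [|i] //=; by rewrite add1n ltnS IH.
have H : p <= j by rewrite leqNgt Hjp.
have C0 : count (fun q => j < q) l = 0.
  rewrite (eq_in_count (a2 := pred0)) ?count_pred0 // => q /Hle Hq /=.
  by rewrite ltnNge (leq_trans Hq H).
rewrite add0n C0; case: i => [|i] //=; symmetry; apply/negbTE; rewrite -leqNgt //.
have : nth 0 l i <= p.
  case: (ltnP i (size l)) => Hi; first by apply: Hle; rewrite mem_nth.
  by rewrite nth_default.
move=> Hn; exact: leq_trans Hn H.
Qed.

Lemma nth_conj (la : seq nat) j : sorted geq la ->
  nth 0 (conj_part la) j = count (fun p => j < p) la.
Proof.
move=> Hs; rewrite /conj_part; case: (ltnP j (head 0 la)) => H.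
  by rewrite nth_mkseq.
rewrite nth_default ?size_mkseq //.
rewrite (eq_in_count (a2 := pred0)) ?count_pred0 // => q /(head_max Hs) Hq /=.
by rewrite ltnNge (leq_trans Hq H).
Qed.

Lemma cellp_conj n (la : seq nat) (i j : 'I_n) : sorted geq la ->
  cellp (conj_part la) (j, i) = cellp la (i, j).
Proof. move=> Hs; by rewrite /cellp /= nth_conj // count_nth. Qed.

Section Tr.
Variables (n k : nat).
Local Notation cell := ('I_n * 'I_n)%type.

Lemma eqforall_sw (F G : cell -> bool) :
  (forall i j, F (j, i) = G (i, j)) -> [forall u, F u] = [forall u, G u].
Proof.
move=> H; apply/forallP/forallP => Hf [i j].
- rewrite -H; exact: Hf.
- by have := Hf (j, i); rewrite H.
Qed.

Lemma eqexists_sw (F G : cell -> bool) :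
  (forall i j, F (j, i) = G (i, j)) -> [exists u, F u] = [exists u, G u].
Proof.
move=> H; apply/existsP/existsP => [[[i j] Hf]|[[i j] Hf]].
- exists (j, i); by rewrite -H.
- exists (j, i); by rewrite H.
Qed.

Definition trS (S : filling n k) : filling n k := [ffun u => S (u.2, u.1)].

Lemma trSK S : trS (trS S) = S.
Proof. by apply/ffunP => -[i j]; rewrite !ffunE. Qed.

Lemma sytk_tr la S : sorted geq la -> sytk (conj_part la) (trS S) = sytk la S.
Proof.
move=> Hs; rewrite /sytk; congr [&& _, _, _, _ & _].
- apply: eqforall_sw => i j; by rewrite ffunE /= cellp_conj.
- apply: eqforall_sw => i j; by rewrite ffunE /= cellp_conj.
- apply: eqforall_sw => i j; apply: eqforall_sw => i' j'.
  by rewrite !ffunE /= !xpair_eqE andbC.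
- apply: eq_forallb => x; apply: eqexists_sw => i j; by rewrite ffunE.
- apply: eqforall_sw => i j; apply: eqforall_sw => i' j'.
  rewrite !ffunE /= !cellp_conj // !xpair_eqE; congr (_ ==> _).
  by rewrite (andbC (j == j')) (andbC (j <= j')).
Qed.

Lemma desk_tr S : desk (trS S) = deskw (fun c => c.2) S.
Proof.
apply/setP => x; rewrite !inE; congr orb.
- apply: eqexists_sw => i j; by rewrite /is_min ffunE.
- apply: eqexists_sw => i j; apply: eqexists_sw => i' j'; apply: eq_existsb => y.
  by rewrite /is_min !ffunE.
Qed.

Definition wrow (c : cell) := c.1 * n + c.2.
Definition wcol (c : cell) := c.2 * n + c.1.

Lemma lin_inj (m u1 u2 v1 v2 : nat) : u2 < m -> v2 < m -> u1 * m + u2 = v1 * m + v2 ->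
  u1 = v1 /\ u2 = v2.
Proof.
move=> h1 h2 E; case: (ltngtP u1 v1) => L.
- have : u1.+1 * m <= v1 * m by rewrite leq_mul2r L orbT.
  rewrite mulSn; lia.
- have : v1.+1 * m <= u1 * m by rewrite leq_mul2r L orbT.
  rewrite mulSn; lia.
- subst; lia.
Qed.

Lemma lin_lt (m u1 u2 v1 v2 : nat) : u2 < m -> v2 < m -> u1 <= v1 -> u2 <= v2 ->
  (u1 != v1) || (u2 != v2) -> u1 * m + u2 < v1 * m + v2.
Proof.
move=> h1 h2 L1 L2 H; case: (ltngtP u1 v1) => L.
- have : u1.+1 * m <= v1 * m by rewrite leq_mul2r L orbT.
  rewrite mulSn; lia.
- lia.
- subst; move: H; rewrite eqxx /=; lia.
Qed.

Lemma natw_row la : natw la wrow.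
Proof.
move=> [u1 u2] [v1 v2] _ _; rewrite /wrow /leC xpair_eqE /= => H.
have h1 := ltn_ord u2; have h2 := ltn_ord v2.
apply/andP; split.
- apply/negP => /eqP E; have [E1 E2] := lin_inj h1 h2 E.
  by move: H; rewrite (val_inj E1) (val_inj E2) !eqxx.
- apply/implyP => /andP [L1 L2]; apply: lin_lt => //.
  by move: H; rewrite negb_and -!val_eqE.
Qed.

Lemma natw_col la : natw la wcol.
Proof.
move=> [u1 u2] [v1 v2] _ _; rewrite /wcol /leC xpair_eqE /= => H.
have h1 := ltn_ord u1; have h2 := ltn_ord v1.
apply/andP; split.
- apply/negP => /eqP E; have [E1 E2] := lin_inj h1 h2 E.
  by move: H; rewrite (val_inj E1) (val_inj E2) !eqxx.
- apply/implyP => /andP [L1 L2]; apply: lin_lt => //.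
  by move: H; rewrite negb_and -!val_eqE orbC.
Qed.

Lemma pair_facts la (S : filling n k) c c' (z y' : 'I_(n + k)) : sytk la S ->
  (y' : nat) == z.+1 -> is_min S c z -> is_min S c' y' -> c != c' /\ ~~ leC c' c.
Proof.
move=> HS /eqP Ey H1 H2.
have cc' : c != c'.
  apply/eqP => E; rewrite E in H1; have := min_uniq H1 H2 => E2.
  by move: Ey; rewrite E2; lia.
split => //; apply/negP => L.
have := sy_ord HS (sy_cell HS (minin H2)) (sy_cell HS (minin H1))
  (negbT (introF eqP (fun e => (negP cc') (introT eqP (esym e))))) L (minin H2) (minin H1).
by rewrite Ey; lia.
Qed.

Lemma deskw_row la (S : filling n k) : sytk la S -> deskw (fun c => c.1) S = deskw wrow S.
Proof.
move=> HS; apply: deskw_ext => c c' z y' Ey H1 H2.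
have [cc' nl] := pair_facts HS Ey H1 H2.
move: cc' nl; clear H1 H2 Ey; case: c => [c1 c2]; case: c' => [d1 d2].
rewrite /wrow /leC xpair_eqE -!val_eqE /= => cc' nl.
have h1 := ltn_ord c2; have h2 := ltn_ord d2.
apply/idP/idP => H; nia.
Qed.

Lemma deskw_col la (S : filling n k) : sytk la S -> deskw (fun c => c.2) S = deskw wcol S.
Proof.
move=> HS; apply: deskw_ext => c c' z y' Ey H1 H2.
have [cc' nl] := pair_facts HS Ey H1 H2.
move: cc' nl; clear H1 H2 Ey; case: c => [c1 c2]; case: c' => [d1 d2].
rewrite /wcol /leC xpair_eqE -!val_eqE /= => cc' nl.
have h1 := ltn_ord c1; have h2 := ltn_ord d1.
apply/idP/idP => H; nia.
Qed.

End Tr.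

Theorem theorem29 (n k : nat) (la : seq nat) (X : {set 'I_(n + k)}) :
  is_partition la n ->
  #|[set S : filling n k | sytk la S && (desk S == X)]| =
  #|[set S : filling n k | sytk (conj_part la) S && (desk S == X)]|.
Proof.
case/and3P => Hs _ _.
have E1 : [set S : filling n k | sytk la S && (desk S == X)] = Aset la X (@wrow n).
  apply/setP => S; rewrite !inE; case HS: (sytk la S) => //=.
  by rewrite desk_fst (deskw_row HS).
have E2 : Aset la X (@wcol n) = Aset la X (fun c => c.2).
  apply/setP => S; rewrite !inE; case HS: (sytk la S) => //=.
  by rewrite (deskw_col HS).
have Nr : natw la (@wrow n) := @natw_row n la.
have Nc : natw la (@wcol n) := @natw_col n la.
rewrite E1 (@main_ind n k la X _ (@wrow n) (@wcol n) (leqnn _) Nr Nc) E2.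
apply/eqP; rewrite eqn_leq; apply/andP; split.
- apply: (card_le_inj (f := @trS n k)) => [S|S1 S2].
    by rewrite !inE sytk_tr // desk_tr; exact: id.
  by move=> _ _ E; rewrite -(trSK S1) E trSK.
- apply: (card_le_inj (f := @trS n k)) => [S|S1 S2].
    rewrite !inE => /andP [H1 /eqP H2]; apply/andP; split.
      by rewrite -sytk_tr // trSK.
    by rewrite -desk_tr trSK H2.
  by move=> _ _ E; rewrite -(trSK S1) E trSK.
Qed.
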